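(* Let $S$ be a ring, $R$ a noetherian $S$-algebra, $\boldsymbol a=(a_1,\dots,a_n)$ and $\boldsymbol b=(b_1,\dots,b_n)$ sequences in $R$ with $\boldsymbol b$ regular, and $W=\sum_ia_ib_i$. Let $F=\bigoplus_iR\theta_i$, $\delta_+=(\sum_ib_i\theta_i^* )\lrcorner(-)$, $\delta_-=(\sum_ia_i\theta_i)\wedge(-)$ on $\bigwedge F$, and $\pi:(\bigwedge F,\delta_+)\to R/(\boldsymbol b)$ the projection onto $\bigwedge^0F=R$ followed by the quotient map. Suppose given an $S$-linear morphism of complexes $\sigma:R/(\boldsymbol b)\to(\bigwedge F,\delta_+)$ and an $S$-linear map $h$ on $\bigwedge F$ of degree $-1$ with $\delta_+h+h\delta_+=1-\sigma\pi$, $h^2=0$ and $h\sigma=0$. Let $X$ be a finite-rank matrix factorisation of $V\in R$ over $R$ such that $V+W$ lies in the image of the structure map $S\to R$; extend $h,\sigma$ to $S$-linear maps on/between $X\otimes_R\bigwedge F$ and $X\otimes_RR/(\boldsymbol b)$ using a homogeneous $R$-basis of $X$ (with Koszul signs), and set $\mu=d_X\otimes1+1\otimes\delta_-$ and $\sigma_\infty=\sum_{m\ge0}(-1)^m(h\mu)^m\sigma$. Then there is a deformation retract datum of linear factorisations of $V+W$ over $S$ $$(X\otimes_RR/(\boldsymbol b),\,d_X\otimes1)\ \underset{1\otimes\pi}{\overset{\sigma_\infty}{\rightleftarrows}}\ (X\otimes_R\textstyle\bigwedge F,\,1\otimes\delta_++\mu),\qquad h_\infty .$$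
   Context: A linear factorisation of $U$ over a ring $T$ is a $\mathbb{Z}_2$-graded $T$-module (not necessarily free) with an odd $T$-linear differential squaring to multiplication by $U$; morphisms are even maps commuting with the differentials. The symbols $\theta_i$ have odd degree (cohomological degree $-1$), so $\bigwedge F$ is $\mathbb{Z}$-graded with $\delta_\pm$ of degree $\pm1$; $(\bigwedge F,\delta_+)$ is the Koszul complex of $\boldsymbol b$. A deformation retract datum consists of morphisms of linear factorisations $\iota:M\to L$ (here $\sigma_\infty$) and $p:L\to M$ (here $1\otimes\pi$) with $p\iota=1_M$, together with an odd map $h_\infty$ on $L$ with $d_Lh_\infty+h_\infty d_L=1-\iota p$. *)

(* Defs.v *)
From HB Require Import structures.
From mathcomp Require Import all_boot all_order all_algebra.
Set Implicit Arguments. Unset Strict Implicit. Unset Printing Implicit Defensive.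
Import Order.TTheory GRing.Theory.
Local Open Scope ring_scope.

Section Defs.
Variable R : comNzRingType.

Definition is_ideal (I : R -> Prop) :=
  [/\ I 0, (forall x y, I x -> I y -> I (x + y)) & (forall r x, I x -> I (r * x))].

Definition noetherian :=
  forall I : nat -> R -> Prop, (forall k, is_ideal (I k)) ->
    (forall k x, I k x -> I k.+1 x) ->
    exists k0, forall k x, (k0 <= k)%N -> I k x -> I k0 x.

Definition in_ideal_gen n (b : 'I_n -> R) (P : pred 'I_n) (x : R) :=
  exists c : 'I_n -> R, x = \sum_(j | P j) c j * b j.

Definition in_ideal n (b : 'I_n -> R) (x : R) := in_ideal_gen b predT x.

Definition regular_seq n (b : 'I_n -> R) :=
  (forall (i : 'I_n) (x : R),
      in_ideal_gen b (fun j => (j < i)%N) (b i * x) ->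
      in_ideal_gen b (fun j => (j < i)%N) x)
  /\ ~ in_ideal b 1.

(** The exterior algebra /\F of F = (+)_i R theta_i, in the basis
    theta_J = theta_{j1} /\ ... /\ theta_{jk} (j1 < ... < jk), J a subset. *)
Definition ext n := {ffun {set 'I_n} -> R}.

(** /\^k F : homogeneous elements of exterior degree k
    (cohomological degree -k). *)
Definition hom_deg n (k : nat) (w : ext n) := forall J : {set 'I_n}, #|J| != k -> w J = 0.

Definition ksign n (i : 'I_n) (J : {set 'I_n}) : R :=
  (-1) ^+ #|[set j in J | (j < i)%N]|.

Definition wedge n (i : 'I_n) (w : ext n) : ext n :=
  [ffun J : {set 'I_n} => if i \in J then ksign i (J :\ i) * w (J :\ i) else 0].

Definition contr n (i : 'I_n) (w : ext n) : ext n :=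
  [ffun J : {set 'I_n} => if i \in J then 0 else ksign i J * w (i |: J)].

Definition delta_plus n (b : 'I_n -> R) (w : ext n) : ext n :=
  [ffun J : {set 'I_n} => \sum_i b i * contr i w J].

Definition delta_minus n (a : 'I_n -> R) (w : ext n) : ext n :=
  [ffun J : {set 'I_n} => \sum_i a i * wedge i w J].

(** X (x) /\F, where X is free with homogeneous basis e_0..e_{N-1}
    (parities par), coordinates w.r.t. the basis e_i (x) theta_J. *)
Definition KX N n := {ffun 'I_N * {set 'I_n} -> R}.

(** X (x)_R R : coordinates w.r.t. e_i; X (x)_R R/(b) is represented by
    lifts (two lifts define the same element iff they agree mod (b)). *)
Definition XR N := {ffun 'I_N -> R}.

Definition psign (e : bool) : R := if e then -1 else 1.

Definition rowx N n (x : KX N n) (i : 'I_N) : ext n := [ffun J : {set 'I_n} => x (i, J)].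

Definition kpar N n (par : 'I_N -> bool) (k : 'I_N * {set 'I_n}) : bool :=
  par k.1 (+) odd #|k.2|.

Definition dXR N (dX : 'M[R]_N) (z : XR N) : XR N :=
  [ffun i => \sum_j dX i j * z j].

Definition dX1 N n (dX : 'M[R]_N) (x : KX N n) : KX N n :=
  [ffun k => \sum_j dX k.1 j * x (j, k.2)].

(** 1 (x) f for an odd map f on /\F (Koszul sign (-1)^{|e_i|}). *)
Definition one_odd N n (par : 'I_N -> bool) (f : ext n -> ext n) (x : KX N n) : KX N n :=
  [ffun k => psign (par k.1) * f (rowx x k.1) k.2].

Definition mu N n (par : 'I_N -> bool) (dX : 'M[R]_N) (a : 'I_n -> R) (x : KX N n) : KX N n :=
  dX1 dX x + one_odd par (delta_minus a) x.

Definition Dtot N n (par : 'I_N -> bool) (dX : 'M[R]_N) (a b : 'I_n -> R)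
  (x : KX N n) : KX N n :=
  one_odd par (delta_plus b) x + mu par dX a x.

(** 1 (x) sigma (sigma given by an S-linear lift R -> /\F vanishing on (b)) *)
Definition one_sig N n (sigma : R -> ext n) (z : XR N) : KX N n :=
  [ffun k => sigma (z k.1) k.2].

(** 1 (x) pi, lifted: projection onto /\^0 F = R (then reduce mod (b)). *)
Definition one_pi N n (x : KX N n) : XR N := [ffun i => x (i, set0)].

End Defs.

(** sigma_oo = sum_{m>=0} (-1)^m (h mu)^m sigma ; the terms with m > n vanish
    since h mu raises the exterior degree, so the sum is taken over m <= n. *)
Definition sigma_inf (S : comNzRingType) (R : comAlgType S) N n (par : 'I_N -> bool)
  (dX : 'M[R]_N) (a : 'I_n -> R) (h : ext R n -> ext R n) (sigma : R -> ext R n)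
  (z : XR R N) : KX R N n :=
  \sum_(m < n.+1)
     ((-1) ^+ m : S) *: iter m (fun x => one_odd par h (mu par dX a x)) (@one_sig R N n sigma z).

Definition par_map (T1 T2 : finType) (R : comNzRingType) (p1 : T1 -> bool) (p2 : T2 -> bool)
  (oddf : bool) (f : {ffun T1 -> R} -> {ffun T2 -> R}) :=
  forall (e : bool) (x : {ffun T1 -> R}), (forall k, p1 k != e -> x k = 0) ->
     forall k, p2 k != (e (+) oddf) -> f x k = 0.

(* Main.v *)
Require Import Defs.
From HB Require Import structures.
From mathcomp Require Import all_boot all_order all_algebra.
From mathcomp.algebra_tactics Require Import ring.
Set Implicit Arguments. Unset Strict Implicit. Unset Printing Implicit Defensive.
Import Order.TTheory GRing.Theory.
Local Open Scope ring_scope.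


Section Ext.
Variable R : comNzRingType.
Variable n : nat.
Implicit Types (i j : 'I_n) (J : {set 'I_n}) (w : ext R n).

Definition sg (c : bool) : R := if c then -1 else 1.

Lemma ksignU i j J : j \notin J -> ksign R i (j |: J) = sg (j < i)%N * ksign R i J.
Proof.
move=> jJ; rewrite /ksign /sg.
case: ltnP => ji.
  have -> : [set x in j |: J | (x < i)%N] = j |: [set x in J | (x < i)%N].
    apply/setP => x; rewrite !inE; case: eqP => [->|] //=; by rewrite ji.
  by rewrite cardsU1 inE (negbTE jJ) /= exprS.
have -> : [set x in j |: J | (x < i)%N] = [set x in J | (x < i)%N].
  apply/setP => x; rewrite !inE; case: eqP => [->|] //=.
  by rewrite ltnNge ji (negbTE jJ).
by rewrite mul1r.
Qed.

Lemma ksignD i j J : j \in J -> ksign R i J = sg (j < i)%N * ksign R i (J :\ j).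
Proof. by move=> jJ; rewrite -ksignU ?setD11 // setD1K. Qed.

Lemma ksign_self i J : ksign R i (i |: J) = ksign R i J.
Proof.
rewrite /ksign; have -> // : [set x in i |: J | (x < i)%N] = [set x in J | (x < i)%N].
apply/setP => x; rewrite !inE.
by case: (x =P i) => [->|]; rewrite ?ltnn ?andbF //=.
Qed.

Lemma ksign_selfD i J : ksign R i (J :\ i) = ksign R i J.
Proof.
rewrite /ksign; have -> // : [set x in J :\ i | (x < i)%N] = [set x in J | (x < i)%N].
apply/setP => x; rewrite !inE.
by case: (x =P i) => [->|]; rewrite ?ltnn ?andbF //=.
Qed.

Lemma ksign_sq i J : ksign R i J * ksign R i J = 1.
Proof. by rewrite /ksign -exprMn mulrNN mulr1 expr1n. Qed.

Lemma sg_lt i j : i != j -> sg (i < j)%N = - sg (j < i)%N.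
Proof.
by rewrite /sg; case: ltngtP => //= [|/val_inj ->]; rewrite ?opprK ?eqxx.
Qed.

Lemma contr_contr i j w J : contr i (contr j w) J = - contr j (contr i w) J.
Proof.
rewrite !ffunE !inE.
have [->|ij] := eqVneq i j.
  by rewrite /= ?eqxx /= ?mulr0; case: ifP; rewrite ?oppr0 ?mulr0.
have ji : (j == i) = false by rewrite eq_sym (negbTE ij).
rewrite ?(negbTE ij) ?ji /=.
case iJ: (i \in J); case jJ: (j \in J); rewrite /= ?mulr0 ?oppr0 //.
rewrite (ksignU _ (negbT iJ)) (ksignU _ (negbT jJ)) [j |: (i |: J)]setUCA.
rewrite (sg_lt ij); by ring.
Qed.

Lemma wedge_wedge i j w J : wedge i (wedge j w) J = - wedge j (wedge i w) J.
Proof.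
rewrite !ffunE !inE.
have [->|ij] := eqVneq i j.
  by rewrite /= ?eqxx /= ?mulr0; case: ifP; rewrite ?oppr0 ?mulr0.
have ji : (j == i) = false by rewrite eq_sym (negbTE ij).
rewrite ?ij ?ji /=.
case iJ: (i \in J); case jJ: (j \in J); rewrite /= ?mulr0 ?oppr0 //.
have jJi : j \in J :\ i by rewrite !inE ji jJ.
have iJj : i \in J :\ j by rewrite !inE ij iJ.
rewrite (ksignD i jJi) (ksignD j iJj).
have -> : J :\ i :\ j = J :\ j :\ i by rewrite setDDl setUC -setDDl.
rewrite (sg_lt ij); by ring.
Qed.

Lemma contr_wedge i j w J :
  contr i (wedge j w) J + wedge j (contr i w) J = if i == j then w J else 0.
Proof.
rewrite !ffunE !inE.
have [<-|ij] := eqVneq i j.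
  rewrite /=; case iJ: (i \in J); rewrite /= ?mulr0 ?add0r ?addr0.
    by rewrite mulrA ksign_selfD ksign_sq mul1r setD1K.
  by rewrite setU1K ?(negbT iJ) // mulrA ksign_sq mul1r.
have ji : (j == i) = false by rewrite eq_sym (negbTE ij).
rewrite ?ij ?ji /=.
case iJ: (i \in J); case jJ: (j \in J); rewrite /= ?mulr0 ?addr0 ?add0r //.
have iJj : i \notin J :\ j by rewrite !inE iJ andbF.
have E : (i |: J) :\ j = i |: (J :\ j).
  by apply/setP => x; rewrite !inE; case: (x =P i) => // ->; rewrite ij.
rewrite E (ksignD i jJ) (ksignU j iJj) (sg_lt ij).
have s2 : sg (j < i)%N * sg (j < i)%N = 1 by rewrite /sg; case: ifP; rewrite ?mulrNN mulr1.
move: (sg _) s2 => s s2.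
transitivity ((1 - s * s) * (ksign R i (J :\ j) * ksign R j (J :\ j) * w (i |: J :\ j))).
  by ring.
by rewrite s2 subrr mul0r.
Qed.


Lemma antisym_sum (f : 'I_n -> 'I_n -> R) :
  (forall i j, f i j = - f j i) -> (forall i, f i i = 0) -> \sum_i \sum_j f i j = 0.
Proof.
move=> fa fd.
pose g i j := if (i < j)%N then f i j else 0.
have E : forall i j, f i j = g i j - g j i.
  move=> i j; rewrite /g; case: ltngtP => [_|_|/val_inj ->]; rewrite ?fd ?subr0 ?sub0r ?subrr //.
under eq_bigr => i _ do under eq_bigr => j _ do rewrite E.
under eq_bigr => i _ do rewrite sumrB.
rewrite sumrB [X in _ - X]exchange_big /=; exact: subrr.
Qed.

Lemma contr_lin (I : finType) i (c : I -> R) (u : I -> ext R n) :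
  contr i [ffun J => \sum_k c k * u k J] = [ffun J => \sum_k c k * contr i (u k) J].
Proof.
apply/ffunP => J; rewrite !ffunE; case: ifP => iJ.
  by rewrite big1 // => k _; rewrite ffunE iJ mulr0.
rewrite mulr_sumr; apply: eq_bigr => k _; rewrite ffunE iJ mulrCA //.
Qed.

Lemma wedge_lin (I : finType) i (c : I -> R) (u : I -> ext R n) :
  wedge i [ffun J => \sum_k c k * u k J] = [ffun J => \sum_k c k * wedge i (u k) J].
Proof.
apply/ffunP => J; rewrite !ffunE; case: ifP => iJ.
  rewrite mulr_sumr; apply: eq_bigr => k _; rewrite ffunE iJ mulrCA //.
by rewrite big1 // => k _; rewrite ffunE iJ mulr0.
Qed.

Lemma dplus_lin (b : 'I_n -> R) (I : finType) (c : I -> R) (u : I -> ext R n) :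
  delta_plus b [ffun J => \sum_k c k * u k J] = [ffun J => \sum_k c k * delta_plus b (u k) J].
Proof.
apply/ffunP => J; rewrite !ffunE.
under eq_bigr => i _ do rewrite contr_lin ffunE mulr_sumr.
rewrite exchange_big; apply: eq_bigr => k _; rewrite ffunE mulr_sumr.
by apply: eq_bigr => i _; rewrite mulrCA.
Qed.

Lemma dminus_lin (a : 'I_n -> R) (I : finType) (c : I -> R) (u : I -> ext R n) :
  delta_minus a [ffun J => \sum_k c k * u k J] = [ffun J => \sum_k c k * delta_minus a (u k) J].
Proof.
apply/ffunP => J; rewrite !ffunE.
under eq_bigr => i _ do rewrite wedge_lin ffunE mulr_sumr.
rewrite exchange_big; apply: eq_bigr => k _; rewrite ffunE mulr_sumr.
by apply: eq_bigr => i _; rewrite mulrCA.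
Qed.

Lemma contr_ii i w J : contr i (contr i w) J = 0.
Proof. by rewrite !ffunE !inE /= ?eqxx /= ?mulr0; case: ifP. Qed.

Lemma wedge_ii i w J : wedge i (wedge i w) J = 0.
Proof. by rewrite !ffunE !inE /= ?eqxx /= ?mulr0; case: ifP. Qed.

Lemma dplus_sq (b : 'I_n -> R) w : delta_plus b (delta_plus b w) = 0.
Proof.
apply/ffunP => J; rewrite [LHS]ffunE ffunE.
under eq_bigr => i _ do rewrite contr_lin ffunE mulr_sumr.
apply: antisym_sum => [i j|i]; last by rewrite contr_ii !mulr0.
by rewrite contr_contr; ring.
Qed.

Lemma dminus_sq (a : 'I_n -> R) w : delta_minus a (delta_minus a w) = 0.
Proof.
apply/ffunP => J; rewrite [LHS]ffunE ffunE.
under eq_bigr => i _ do rewrite wedge_lin ffunE mulr_sumr.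
apply: antisym_sum => [i j|i]; last by rewrite wedge_ii !mulr0.
by rewrite wedge_wedge; ring.
Qed.

Lemma dplus_minus (a b : 'I_n -> R) w J :
  delta_plus b (delta_minus a w) J + delta_minus a (delta_plus b w) J =
  (\sum_i a i * b i) * w J.
Proof.
rewrite !ffunE.
under eq_bigr => i _ do rewrite contr_lin ffunE mulr_sumr.
under [X in _ + X = _]eq_bigr => i _ do rewrite wedge_lin ffunE mulr_sumr.
rewrite [X in _ + X = _]exchange_big -big_split /= mulr_suml.
apply: eq_bigr => i _; rewrite -big_split /=.
rewrite (bigD1 i) //= big1 ?addr0.
  have := contr_wedge i i w J; rewrite eqxx => <-; ring.
move=> j ij; have := contr_wedge i j w J; rewrite eq_sym (negbTE ij).
move=> e; transitivity (b i * a j * (contr i (wedge j w) J + wedge j (contr i w) J)).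
  by ring.
by rewrite e mulr0.
Qed.


Definition addF (f : ext R n -> ext R n) := forall u v, f (u + v) = f u + f v.

Lemma addF0 f : addF f -> f 0 = 0.
Proof. move=> H; have := H 0 0; rewrite addr0 => E; apply: (addrI (f 0)); by rewrite -E addr0. Qed.

Lemma addFN f u : addF f -> f (- u) = - f u.
Proof.
move=> H; apply/eqP; rewrite -subr_eq0 opprK -H addNr; apply/eqP; exact: addF0.
Qed.

Lemma addF_sum f (I : Type) (r : seq I) (P : pred I) (F : I -> ext R n) :
  addF f -> f (\sum_(i <- r | P i) F i) = \sum_(i <- r | P i) f (F i).
Proof. move=> H; exact: (big_morph f H (addF0 H)). Qed.

Definition hp (l : nat) w : ext R n := [ffun J : {set 'I_n} => if #|J| == l then w J else 0].

Lemma hp_hom l w : hom_deg l (hp l w).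
Proof. by move=> J /negbTE JL; rewrite ffunE JL. Qed.

Lemma card_le J : (#|J| <= n)%N.
Proof. by rewrite -[X in (_ <= X)%N]card_ord max_card. Qed.

Lemma hp_sum w : w = \sum_(l < n.+1) hp l w.
Proof.
apply/ffunP => J; rewrite sum_ffunE (bigD1 (inord #|J|)) //= ffunE inordK ?ltnS ?card_le //.
rewrite eqxx big1 ?addr0 // => l lJ; rewrite ffunE; case: eqP => // E.
by move: lJ; rewrite E inord_val eqxx.
Qed.

Lemma h_support (h : ext R n -> ext R n) (P : nat -> bool) w :
  addF h -> (forall (k : nat) (w : ext R n), hom_deg k w -> hom_deg k.+1 (h w)) ->
  (forall J, ~~ P #|J| -> w J = 0) ->
  forall J, (forall l, P l -> #|J| != l.+1) -> h w J = 0.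
Proof.
move=> ha hd wP J JP.
rewrite (hp_sum w) addF_sum // sum_ffunE big1 // => l _.
case Pl: (P l).
  exact: (hd _ _ (@hp_hom l w) J (JP l Pl)).
have -> : hp l w = 0.
  apply/ffunP => K; rewrite !ffunE; case: eqP => // E.
  by apply: wP; rewrite E Pl.
by rewrite addF0 // ffunE.
Qed.

Definition ext_odd (f : ext R n -> ext R n) := forall (e : bool) w,
  (forall J, odd #|J| != e -> w J = 0) -> forall J, odd #|J| != ~~ e -> f w J = 0.

Lemma contr_odd i : ext_odd (contr i).
Proof.
move=> e w wP J JP; rewrite ffunE; case: ifP => iJ //.
rewrite wP ?mulr0 // cardsU1 iJ /=; clear wP; by case: e JP; case: (odd _).
Qed.

Lemma wedge_odd i : ext_odd (wedge i).
Proof.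
move=> e w wP J JP; rewrite ffunE; case: ifP => iJ //.
rewrite wP ?mulr0 //; clear wP; move: JP; rewrite (cardsD1 i J) iJ /=.
by case: e; case: (odd _).
Qed.

Lemma dplus_odd b : ext_odd (delta_plus b).
Proof.
move=> e w wP J JP; rewrite ffunE big1 // => i _.
by rewrite (contr_odd i wP JP) mulr0.
Qed.

Lemma dminus_odd a : ext_odd (delta_minus a).
Proof.
move=> e w wP J JP; rewrite ffunE big1 // => i _.
by rewrite (wedge_odd i wP JP) mulr0.
Qed.

Lemma dplus_add b : addF (delta_plus b).
Proof.
move=> u v; apply/ffunP => J; rewrite !ffunE -big_split; apply: eq_bigr => i _ /=.
rewrite -mulrDr; congr (_ * _); rewrite !ffunE; case: ifP => _; rewrite ?addr0 // mulrDr //.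
Qed.

Lemma dminus_add a : addF (delta_minus a).
Proof.
move=> u v; apply/ffunP => J; rewrite !ffunE -big_split; apply: eq_bigr => i _ /=.
rewrite -mulrDr; congr (_ * _); rewrite !ffunE; case: ifP => _; rewrite ?addr0 // mulrDr //.
Qed.

End Ext.


Section Tens.
Variable R : comNzRingType.
Variables (N n : nat) (par : 'I_N -> bool).
Implicit Types (x y : KX R N n) (f g : ext R n -> ext R n).

Lemma psign_sq e : psign R e * psign R e = 1.
Proof. by case: e; rewrite /psign ?mulrNN mulr1. Qed.

Lemma psign_neg e : psign R (~~ e) = - psign R e.
Proof. by case: e; rewrite /psign ?opprK. Qed.

Lemma rowx_add x y i : rowx (x + y) i = rowx x i + rowx y i.
Proof. by apply/ffunP => J; rewrite !ffunE. Qed.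

Lemma one_odd2 f g x : addF f ->
  one_odd par f (one_odd par g x) = [ffun k => f (g (rowx x k.1)) k.2].
Proof.
move=> fa; apply/ffunP => -[i J]; rewrite !ffunE /=.
have -> : rowx (one_odd par g x) i = if par i then - g (rowx x i) else g (rowx x i).
  apply/ffunP => K; rewrite !ffunE /psign; case: (par i); rewrite ?ffunE ?mulN1r ?mul1r //.
rewrite /psign; case: (par i); rewrite ?addFN // ?mulN1r ?ffunE ?opprK ?mul1r //.
Qed.

Lemma one_odd_add f x y : addF f -> one_odd par f (x + y) = one_odd par f x + one_odd par f y.
Proof.
move=> fa; apply/ffunP => -[i J]; rewrite !ffunE /= rowx_add fa ffunE mulrDr //.
Qed.

Lemma dX1_add (dX : 'M[R]_N) x y : dX1 dX (x + y) = dX1 dX x + dX1 dX y.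
Proof.
apply/ffunP => -[i J]; rewrite !ffunE -big_split; apply: eq_bigr => j _ /=.
by rewrite ffunE mulrDr.
Qed.

Definition Rlin f := forall (c : 'I_N -> R) (u : 'I_N -> ext R n),
  f [ffun J => \sum_k c k * u k J] = [ffun J => \sum_k c k * f (u k) J].

Lemma anti_dX1 (dX : 'M[R]_N) f x :
  (forall i j, par i = par j -> dX i j = 0) -> Rlin f ->
  dX1 dX (one_odd par f x) + one_odd par f (dX1 dX x) = 0.
Proof.
move=> dXo fl; apply/ffunP => -[i J]; rewrite !ffunE /=.
have -> : rowx (dX1 dX x) i = [ffun K => \sum_j dX i j * rowx x j K].
  by apply/ffunP => K; rewrite !ffunE; apply: eq_bigr => j _; rewrite ffunE.
rewrite fl ffunE mulr_sumr -big_split big1 // => j _ /=.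
rewrite ffunE /=.
case: (eqVneq (par i) (par j)) => pij; first by rewrite dXo // !mul0r mulr0 addr0.
have -> : par j = ~~ par i by move: pij; case: (par i); case: (par j).
by rewrite psign_neg; ring.
Qed.

Lemma dX1_sq (dX : 'M[R]_N) V x : dX *m dX = V%:M ->
  dX1 dX (dX1 dX x) = [ffun k => V * x k].
Proof.
move=> dsq; apply/ffunP => -[i J]; rewrite !ffunE /=.
under eq_bigr => j _ do rewrite ffunE /= mulr_sumr.
rewrite exchange_big /=.
have e : forall l, \sum_j dX i j * (dX j l * x (l, J)) = (dX *m dX) i l * x (l, J).
  by move=> l; rewrite mxE mulr_suml; apply: eq_bigr => j _; rewrite mulrA.
under eq_bigr => l _ do rewrite e dsq mxE.
rewrite (bigD1 i) //= eqxx mulr1n big1 ?addr0 // => l li.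
by rewrite eq_sym (negbTE li) mulr0n mul0r.
Qed.

Lemma dplus_Rlin b : Rlin (delta_plus b).
Proof. move=> c u; exact: dplus_lin. Qed.

Lemma dminus_Rlin a : Rlin (delta_minus a).
Proof. move=> c u; exact: dminus_lin. Qed.

Lemma Dsq (dX : 'M[R]_N) (a b : 'I_n -> R) V x :
  (forall i j, par i = par j -> dX i j = 0) -> dX *m dX = V%:M ->
  Dtot par dX a b (Dtot par dX a b x) = [ffun k => (V + \sum_i a i * b i) * x k].
Proof.
move=> dXo dsq.
rewrite /Dtot /mu.
set P := one_odd par (delta_plus b); set M := dX1 dX; set Q := one_odd par (delta_minus a).
have Pa : forall u v, P (u + v) = P u + P v by move=> u v; apply: one_odd_add; apply: dplus_add.
have Qa : forall u v, Q (u + v) = Q u + Q v by move=> u v; apply: one_odd_add; apply: dminus_add.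
have Ma : forall u v, M (u + v) = M u + M v by move=> u v; apply: dX1_add.
rewrite !Pa !Qa !Ma.
have e1 : P (P x) = 0.
  rewrite /P one_odd2; last exact: dplus_add.
  by apply/ffunP => k; rewrite ffunE /= dplus_sq !ffunE.
have e6 : Q (Q x) = 0.
  rewrite /Q one_odd2; last exact: dminus_add.
  by apply/ffunP => k; rewrite ffunE /= dminus_sq !ffunE.
have e2 : P (M x) = - M (P x).
  by apply/eqP; rewrite -subr_eq0 opprK addrC anti_dX1 //; apply: dplus_Rlin.
have e3 : Q (M x) = - M (Q x).
  by apply/eqP; rewrite -subr_eq0 opprK addrC anti_dX1 //; apply: dminus_Rlin.
have e5 : M (M x) = [ffun k => V * x k] by apply: dX1_sq.
have e4 : P (Q x) + Q (P x) = [ffun k => (\sum_i a i * b i) * x k].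
  rewrite /P /Q one_odd2; last exact: dplus_add.
  rewrite one_odd2; last exact: dminus_add.
  apply/ffunP => k; have e := @dplus_minus _ _ a b (rowx x k.1) k.2.
  by rewrite !ffunE in e *; rewrite e -surjective_pairing.
move: e4; rewrite e1 e6 e2 e3 e5 => e4.
have -> : Q (P x) = [ffun k => (\sum_i a i * b i) * x k] - P (Q x).
  by rewrite -e4 addrC addKr.
move: (M (P x)) (P (Q x)) (M (Q x)) => u v w.
apply/ffunP => k; rewrite !ffunE; ring.
Qed.

End Tens.


Section Main.
Variables (S : comNzRingType) (R : comAlgType S) (n : nat) (a b : 'I_n -> R).
Variables (sigma : R -> ext R n) (h : ext R n -> ext R n).
Variable sigma_lin : linear sigma.
Variable sigma_wd : forall x, in_ideal b x -> sigma x = 0.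
Variable sigma_deg : forall x, hom_deg 0 (sigma x).
Variable sigma_chain : forall x, delta_plus b (sigma x) = 0.
Variable h_lin : linear h.
Variable h_deg : forall (k : nat) (w : ext R n), hom_deg k w -> hom_deg k.+1 (h w).
Variable h_htpy : forall w, delta_plus b (h w) + h (delta_plus b w) = w - sigma (w set0).
Variable h_sq : forall w, h (h w) = 0.
Variable h_sig : forall x, h (sigma x) = 0.
Variables (N : nat) (par : 'I_N -> bool) (dX : 'M[R]_N) (V : R).
Variable dX_odd : forall i j, par i = par j -> dX i j = 0.
Variable dX_sq : dX *m dX = V%:M.
Variable s : S.
Variable Vs : V + \sum_i a i * b i = s%:A.

Implicit Types (x y : KX R N n) (z : XR R N) (w : ext R n).

Definition slin (f : KX R N n -> KX R N n) := forall (c : S) x y, f (c *: x + y) = c *: f x + f y.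

Lemma slin_add f x y : slin f -> f (x + y) = f x + f y.
Proof. by move=> fl; have := fl 1 x y; rewrite !scale1r. Qed.

Lemma slin_0 f : slin f -> f 0 = 0.
Proof.
move=> fl; have := slin_add 0 0 fl; rewrite addr0 => E.
by apply: (addrI (f 0)); rewrite -E addr0.
Qed.

Lemma slin_Z f c x : slin f -> f (c *: x) = c *: f x.
Proof. by move=> fl; rewrite -[c *: x]addr0 fl slin_0 // addr0. Qed.

Lemma slin_N f x : slin f -> f (- x) = - f x.
Proof. by move=> fl; rewrite -scaleN1r slin_Z // scaleN1r. Qed.

Lemma slin_sum f (I : Type) (r : seq I) (P : pred I) (F : I -> KX R N n) :
  slin f -> f (\sum_(i <- r | P i) F i) = \sum_(i <- r | P i) f (F i).
Proof. move=> fl; exact: (big_morph f (fun x y => slin_add x y fl) (slin_0 fl)). Qed.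

Lemma slin_comp f g : slin f -> slin g -> slin (fun x => f (g x)).
Proof. by move=> fl gl c x y; rewrite gl fl. Qed.

Lemma slin_iter f m : slin f -> slin (iter m f).
Proof. by move=> fl; elim: m => [|m IH] c x y //=; rewrite IH fl. Qed.

Lemma h_add : addF h.
Proof. by move=> u v; have := h_lin 1 u v; rewrite !scale1r. Qed.

Definition wlin (f : ext R n -> ext R n) := forall (c : S) u v, f (c *: u + v) = c *: f u + f v.

Lemma rowx_lin (c : S) x y i : rowx (c *: x + y) i = c *: rowx x i + rowx y i.
Proof. by apply/ffunP => J; rewrite !ffunE. Qed.

Lemma one_odd_slin f : wlin f -> slin (one_odd par f).
Proof.
move=> fl c x y; apply/ffunP => -[i J]; rewrite !ffunE /= rowx_lin fl !ffunE.
by rewrite mulrDr scalerAr.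
Qed.

Lemma contr_wlin i : wlin (contr i).
Proof.
move=> c u v; apply/ffunP => J; rewrite !ffunE; case: ifP => _; first by rewrite scaler0 addr0.
by rewrite mulrDr scalerAr.
Qed.

Lemma wedge_wlin i : wlin (wedge i).
Proof.
move=> c u v; apply/ffunP => J; rewrite !ffunE; case: ifP => _; last by rewrite scaler0 addr0.
by rewrite mulrDr scalerAr.
Qed.

Lemma dplus_wlin : wlin (delta_plus b).
Proof.
move=> c u v; apply/ffunP => J; rewrite !ffunE scaler_sumr -big_split; apply: eq_bigr => i _ /=.
by rewrite (@contr_wlin i c u v) !ffunE mulrDr scalerAr.
Qed.

Lemma dminus_wlin : wlin (delta_minus a).
Proof.
move=> c u v; apply/ffunP => J; rewrite !ffunE scaler_sumr -big_split; apply: eq_bigr => i _ /=.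
by rewrite (@wedge_wlin i c u v) !ffunE mulrDr scalerAr.
Qed.

Lemma dX1_slin : slin (dX1 dX).
Proof.
move=> c x y; apply/ffunP => -[i J]; rewrite !ffunE scaler_sumr -big_split; apply: eq_bigr => j _ /=.
by rewrite !ffunE mulrDr scalerAr.
Qed.

Lemma slin_plus f g : slin f -> slin g -> slin (fun t => f t + g t).
Proof. by move=> fl gl c x y; rewrite fl gl scalerDr addrACA. Qed.

Definition Hh := one_odd par h.
Definition dd := one_odd par (delta_plus b).
Definition MM := mu par dX a.
Definition Sg := @one_sig R N n sigma.
Definition AA x := Hh (MM x).
Definition TT y := \sum_(m < n.+1) ((-1) ^+ m : S) *: iter m AA y.
Definition DD := Dtot par dX a b.

Lemma Hh_slin : slin Hh. Proof. exact: one_odd_slin h_lin. Qed.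
Lemma dd_slin : slin dd. Proof. exact: one_odd_slin dplus_wlin. Qed.
Lemma MM_slin : slin MM.
Proof. exact: (slin_plus dX1_slin (one_odd_slin dminus_wlin)). Qed.
Lemma AA_slin : slin AA. Proof. exact: slin_comp Hh_slin MM_slin. Qed.
Lemma TT_slin : slin TT.
Proof.
move=> c x y; rewrite /TT scaler_sumr -big_split; apply: eq_bigr => m _ /=.
rewrite slin_iter; last exact: AA_slin.
by rewrite scalerDr !scalerA mulrC.
Qed.
Lemma DD_slin : slin DD.
Proof. exact: (slin_plus dd_slin MM_slin). Qed.


Lemma HH x : Hh (Hh x) = 0.
Proof.
rewrite /Hh one_odd2; last exact: h_add.
by apply/ffunP => k; rewrite ffunE /= h_sq !ffunE.
Qed.

Lemma rowx_Sg z i : rowx (Sg z) i = sigma (z i).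
Proof. by apply/ffunP => J; rewrite !ffunE. Qed.

Lemma HSg z : Hh (Sg z) = 0.
Proof. by apply/ffunP => -[i J]; rewrite [LHS]ffunE /= rowx_Sg h_sig !ffunE mulr0. Qed.

Lemma dSg z : dd (Sg z) = 0.
Proof. by apply/ffunP => -[i J]; rewrite [LHS]ffunE /= rowx_Sg sigma_chain !ffunE mulr0. Qed.

Lemma dd2 x : dd (dd x) = 0.
Proof.
rewrite /dd one_odd2; last exact: dplus_add.
by apply/ffunP => k; rewrite ffunE /= dplus_sq !ffunE.
Qed.

Lemma htpyT x : Hh (dd x) = x - Sg (one_pi x) - dd (Hh x).
Proof.
suff e : dd (Hh x) + Hh (dd x) = x - Sg (one_pi x).
  by rewrite -e addrC addKr.
rewrite /dd /Hh one_odd2; last exact: dplus_add.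
rewrite one_odd2; last exact: h_add.
apply/ffunP => -[i J].
have e := congr1 (fun f : ext R n => f J) (h_htpy (rowx x i)).
by rewrite /= !ffunE /= in e *; rewrite e.
Qed.

Lemma h0 w : h w set0 = 0.
Proof.
apply: (@h_support _ _ h (fun _ => true)) => //; first exact: h_add.
by move=> l _; rewrite cards0.
Qed.

Lemma Pi_H x : one_pi (Hh x) = 0.
Proof. by apply/ffunP => i; rewrite !ffunE h0 mulr0. Qed.

Lemma dminus0 w : delta_minus a w set0 = 0.
Proof. by rewrite ffunE big1 // => i _; rewrite ffunE inE mulr0. Qed.

Lemma Pi_MM x i : one_pi (MM x) i = \sum_j dX i j * x (j, set0).
Proof.
rewrite /MM /mu !ffunE /= [X in _ + _ * X]big1 ?mulr0 ?addr0 // => l _.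
by rewrite ffunE inE mulr0.
Qed.


Definition tmd (m : nat) x := forall i (J : {set 'I_n}), (#|J| < m)%N -> x (i, J) = 0.

Lemma MM_md m x : tmd m x -> tmd m (MM x).
Proof.
move=> xm i J Jm; rewrite /MM /mu !ffunE /=.
rewrite big1 ?add0r => [|j _]; last by rewrite xm // mulr0.
rewrite big1 ?mulr0 // => l _; rewrite ffunE; case: ifP => lJ; last by rewrite mulr0.
rewrite ffunE xm ?mulr0 //; apply: leq_ltn_trans Jm.
by rewrite (cardsD1 l J) lJ.
Qed.

Lemma Hh_md m x : tmd m x -> tmd m.+1 (Hh x).
Proof.
move=> xm i J Jm; rewrite ffunE /=.
rewrite (@h_support _ _ h (fun l => (m <= l)%N)) ?mulr0 //.
- exact: h_add.
- by move=> K; rewrite -ltnNge => Km; rewrite ffunE xm.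
- by move=> l ml; rewrite neq_ltn; apply/orP; left; rewrite ltnS (leq_trans _ ml) // -ltnS.
Qed.

Lemma iter_md m x : tmd m (iter m AA x).
Proof.
elim: m => [|m IH] /=; first by move=> i J.
exact: Hh_md (MM_md IH).
Qed.

Lemma AA_nil x : iter n.+1 AA x = 0.
Proof.
apply/ffunP => -[i J]; rewrite iter_md ?ffunE // ltnS; exact: card_le.
Qed.

Lemma tele y : \sum_(m < n.+1) ((-1) ^+ m : S) *: iter m AA y
  + \sum_(m < n.+1) ((-1) ^+ m : S) *: iter m.+1 AA y = y.
Proof.
rewrite big_ord_recl big_ord_recr /= -iterS AA_nil scaler0 addr0 expr0 scale1r.
rewrite -addrA -big_split big1 ?addr0 // => m _ /=.
by rewrite /bump leq0n add0n add1n exprS mulN1r scaleNr addNr.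
Qed.

Lemma TT_inv y : TT (y + AA y) = y.
Proof.
rewrite /TT; under eq_bigr => m _ do rewrite (slin_add _ _ (slin_iter m AA_slin)) -iterSr scalerDr.
by rewrite big_split /= tele.
Qed.

Lemma TT_inv' y : TT y + AA (TT y) = y.
Proof.
rewrite /TT slin_sum; last exact: AA_slin.
under [X in _ + X]eq_bigr => m _ do rewrite (slin_Z _ _ AA_slin) -iterS.
exact: tele.
Qed.


Lemma DD_sq y : DD (DD y) = s *: y.
Proof.
rewrite /DD (Dsq a b _ dX_odd dX_sq) Vs; apply/ffunP => k; rewrite !ffunE mulr_algl //.
Qed.

Lemma key y : DD y + AA (DD y) = dd (y + AA y) + Hh (s *: y) + Sg (one_pi (MM y)).
Proof.
have eDD : forall u, DD u = dd u + MM u by [].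
rewrite /AA.
have -> : MM (DD y) = DD (DD y) - dd (DD y) by rewrite [DD (DD y)]eDD addrC addKr.
rewrite (slin_add _ _ Hh_slin) (slin_N _ Hh_slin) DD_sq.
have -> : dd (DD y) = dd (MM y) by rewrite (eDD y) (slin_add _ _ dd_slin) dd2 add0r.
rewrite htpyT (eDD y) (slin_add _ _ dd_slin).
move: (dd y) (MM y) (Hh (s *: y)) (Sg (one_pi (MM y))) (dd (Hh (MM y))) => u v w t r.
by apply/ffunP => k; rewrite !ffunE; ring.
Qed.

Lemma HT_Sg z : Hh (TT (Sg z)) = 0.
Proof.
rewrite /TT (slin_sum _ _ _ Hh_slin) big1 // => -[[|m] lm] _ /=.
  by rewrite (slin_Z _ _ Hh_slin) HSg scaler0.
by rewrite (slin_Z _ _ Hh_slin) /AA HH scaler0.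
Qed.

Lemma HT_H x : Hh (TT (Hh x)) = 0.
Proof.
rewrite /TT (slin_sum _ _ _ Hh_slin) big1 // => -[[|m] lm] _ /=.
  by rewrite (slin_Z _ _ Hh_slin) HH scaler0.
by rewrite (slin_Z _ _ Hh_slin) /AA HH scaler0.
Qed.

Lemma Pi_MM_H x : one_pi (MM (Hh x)) = 0.
Proof.
apply/ffunP => i; rewrite Pi_MM ffunE big1 // => j _.
by have := congr1 (fun f : XR R N => f j) (Pi_H x); rewrite !ffunE => ->; rewrite mulr0.
Qed.

Lemma Pi_add x y : one_pi (x + y) = one_pi x + one_pi y.
Proof. by apply/ffunP => i; rewrite !ffunE. Qed.

Lemma Pi_Z (c : S) x : one_pi (c *: x) = c *: one_pi x.
Proof. by apply/ffunP => i; rewrite !ffunE. Qed.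

Lemma Pi_sum (I : Type) (r : seq I) (P : pred I) (F : I -> KX R N n) :
  one_pi (\sum_(i <- r | P i) F i) = \sum_(i <- r | P i) one_pi (F i).
Proof.
apply: (big_morph _ Pi_add); by apply/ffunP => i; rewrite !ffunE.
Qed.

Lemma PiMT_gen y : (forall m, (0 < m)%N -> one_pi (MM (iter m AA y)) = 0) ->
  one_pi (MM (TT y)) = one_pi (MM y).
Proof.
move=> hm; rewrite /TT (slin_sum _ _ _ MM_slin) Pi_sum big_ord_recl /=.
rewrite big1 ?addr0 => [|m _]; last by rewrite (slin_Z _ _ MM_slin) Pi_Z -iterS hm ?scaler0.
by rewrite expr0 scale1r.
Qed.

Lemma PiMT_Sg z : one_pi (MM (TT (Sg z))) = one_pi (MM (Sg z)).
Proof. apply: PiMT_gen => -[|m] // _; exact: Pi_MM_H. Qed.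

Lemma PiMT_H x : one_pi (MM (TT (Hh x))) = 0.
Proof.
rewrite PiMT_gen ?Pi_MM_H // => -[|m] // _; exact: Pi_MM_H.
Qed.


Lemma sigma_add p q : sigma (p + q) = sigma p + sigma q.
Proof. by have := sigma_lin 1 p q; rewrite !scale1r. Qed.

Lemma sigma0 : sigma 0 = 0.
Proof.
have := sigma_add 0 0; rewrite addr0 => E.
by apply: (addrI (sigma 0)); rewrite -E addr0.
Qed.

Definition w0 (r : R) : ext R n := [ffun J : {set 'I_n} => if J == set0 then r else 0].
Definition cf (r : R) (l : 'I_n) : R := - (ksign R l set0 * h (w0 r) [set l]).

Lemma sig0 (x : R) : sigma x set0 - x = \sum_l cf x l * b l.
Proof.
have d0 : delta_plus b (w0 x) = 0.
  apply/ffunP => J; rewrite !ffunE big1 // => l _; rewrite !ffunE.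
  case: ifP => _; rewrite ?mulr0 //.
  have -> : (l |: J == set0) = false.
    by apply/negbTE/set0Pn; exists l; exact: setU11.
  by rewrite !mulr0.
have e := h_htpy (w0 x); rewrite d0 (addF0 h_add) addr0 in e.
have e' := congr1 (fun f : ext R n => f set0) e.
rewrite /= [in RHS]ffunE [w0 x set0]ffunE eqxx in e'.
have e2 : delta_plus b (h (w0 x)) set0 = x - sigma x set0 by rewrite e' ffunE.
rewrite -[LHS]opprB -e2 ffunE -sumrN; apply: eq_bigr => l _.
by rewrite ffunE inE /= setU0 /cf; ring.
Qed.

Lemma sigma_ideal u v (c : 'I_n -> R) : u - v = \sum_l c l * b l -> sigma u = sigma v.
Proof.
move=> e; have s0 : sigma (u - v) = 0 by apply: sigma_wd; exists c; rewrite e.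
by rewrite -[u](subrK v) sigma_add s0 add0r.
Qed.

Lemma Sg_dX z : Sg (one_pi (MM (Sg z))) = Sg (dXR dX z).
Proof.
apply/ffunP => -[i J]; rewrite [LHS]ffunE [RHS]ffunE /=.
rewrite (@sigma_ideal _ (dXR dX z i) (fun l => \sum_j dX i j * cf (z j) l)) //.
rewrite Pi_MM ffunE -sumrB.
under eq_bigr => j _ do rewrite ffunE /= -mulrBr sig0 mulr_sumr.
rewrite exchange_big; apply: eq_bigr => l _ /=; rewrite mulr_suml.
by apply: eq_bigr => j _; rewrite mulrA.
Qed.

Lemma D_sinf z : DD (TT (Sg z)) = TT (Sg (dXR dX z)).
Proof.
have := key (TT (Sg z)).
rewrite TT_inv' dSg add0r (slin_Z _ _ Hh_slin) HT_Sg scaler0 add0r PiMT_Sg Sg_dX => e.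
by rewrite -[LHS]TT_inv e.
Qed.

Lemma Sg0 : Sg 0 = 0.
Proof. by apply/ffunP => k; rewrite !ffunE sigma0 ffunE. Qed.

Lemma hinf_htpy x : DD (TT (Hh x)) + TT (Hh (DD x)) = x - TT (Sg (one_pi x)).
Proof.
set u := DD (TT (Hh x)) + TT (Hh (DD x)).
have e1 : DD (TT (Hh x)) + AA (DD (TT (Hh x))) = dd (Hh x).
  rewrite key TT_inv' (slin_Z _ _ Hh_slin) HT_H scaler0 addr0 PiMT_H Sg0 addr0 //.
have e2 : TT (Hh (DD x)) + AA (TT (Hh (DD x))) = Hh (DD x) by exact: TT_inv'.
have e3 : Hh (DD x) = x - Sg (one_pi x) - dd (Hh x) + AA x.
  by rewrite /DD /Dtot -/dd -/MM (slin_add _ _ Hh_slin) htpyT.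
have -> : u = TT (u + AA u) by rewrite TT_inv.
have -> : u + AA u = (x + AA x) - Sg (one_pi x).
  rewrite /u (slin_add _ _ AA_slin) addrACA e1 e2 e3.
  move: (dd (Hh x)) (Sg (one_pi x)) (AA x) => p q r.
  by apply/ffunP => k; rewrite !ffunE; ring.
by rewrite (slin_add _ _ TT_slin) (slin_N _ TT_slin) TT_inv.
Qed.


Lemma bx1 (p o e : bool) : o != e (+) p -> p (+) o != e.
Proof. by case: p; case: o; case: e. Qed.
Lemma bx2 (p o e : bool) : p (+) o != e (+) true -> o != ~~ (e (+) p).
Proof. by case: p; case: o; case: e. Qed.
Lemma bx3 (p q o e : bool) : q != p -> p (+) o != e (+) true -> q (+) o != e.
Proof. by case: p; case: q; case: o; case: e. Qed.

Lemma one_odd_par (f : ext R n -> ext R n) : ext_odd f -> par_map (kpar par) (kpar par) true (one_odd par f).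
Proof.
move=> fo e x xP [i J] kJ; rewrite ffunE /=.
rewrite (fo (e (+) par i) (rowx x i)) ?mulr0 //; last exact: bx2.
by move=> K KP; rewrite ffunE; apply: xP; apply: bx1.
Qed.

Lemma par_map_add (T1 T2 : finType) (p1 : T1 -> bool) (p2 : T2 -> bool) o
  (f g : {ffun T1 -> R} -> {ffun T2 -> R}) :
  par_map (R:=R) p1 p2 o f -> par_map (R:=R) p1 p2 o g -> par_map (R:=R) p1 p2 o (fun t => f t + g t).
Proof. by move=> fp gp e t tP k kP; rewrite ffunE (fp e t tP k kP) (gp e t tP k kP) addr0. Qed.

Lemma par_map_comp (T1 T2 T3 : finType) (p1 : T1 -> bool) (p2 : T2 -> bool) (p3 : T3 -> bool)
  o1 o2 (f : {ffun T1 -> R} -> {ffun T2 -> R}) (g : {ffun T2 -> R} -> {ffun T3 -> R}) :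
  par_map (R:=R) p1 p2 o1 f -> par_map (R:=R) p2 p3 o2 g -> par_map (R:=R) p1 p3 (o1 (+) o2) (fun t => g (f t)).
Proof. by move=> fp gp e t tP k kP; apply: (gp (e (+) o1)); [exact: fp|by rewrite -addbA]. Qed.

Lemma dX1_par : par_map (kpar (n:=n) par) (kpar (n:=n) par) true (dX1 dX).
Proof.
move=> e x xP [i J] kP; rewrite ffunE big1 // => j _ /=.
case: (eqVneq (par j) (par i)) => pij; first by rewrite dX_odd ?mul0r // pij.
by rewrite xP ?mulr0 //; exact: (bx3 pij kP).
Qed.

Lemma h_odd : ext_odd h.
Proof.
move=> e w wP J JP.
apply: (@h_support _ _ h (fun l => odd l == e)); first exact: h_add.
- exact: h_deg.
- exact: wP.
- move=> l /eqP le; apply/eqP => E; move: JP; rewrite E /= le.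
  by case: e {wP le}.
Qed.

Lemma DD_par : par_map (kpar par) (kpar par) true DD.
Proof.
apply: par_map_add; first exact: one_odd_par (dplus_odd b).
apply: par_map_add; first exact: dX1_par.
exact: one_odd_par (dminus_odd a).
Qed.

Lemma MM_par : par_map (kpar par) (kpar par) true MM.
Proof.
apply: par_map_add; first exact: dX1_par.
exact: one_odd_par (dminus_odd a).
Qed.

Lemma Hh_par : par_map (kpar par) (kpar par) true Hh.
Proof. exact: one_odd_par h_odd. Qed.

Lemma AA_par : par_map (kpar par) (kpar par) false AA.
Proof. exact: (par_map_comp MM_par Hh_par). Qed.

Lemma TT_par : par_map (kpar par) (kpar par) false TT.
Proof.
move=> e x xP k kP; rewrite /TT sum_ffunE big1 // => m _; rewrite ffunE.
suff -> : iter m AA x k = 0 by rewrite scaler0.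
elim: (nat_of_ord m) k kP => [|m' IH] k kP /=; first by apply: xP; rewrite addbF in kP.
by apply: (AA_par (e := e)) => // k' kP'; apply: IH; rewrite addbF.
Qed.

Lemma Sg_par : par_map par (kpar par) false Sg.
Proof.
move=> e z zP [i J] kP; rewrite ffunE /=.
have [J0|J0] := eqVneq J set0.
  rewrite zP ?sigma0 ?ffunE //; move: kP; rewrite /kpar /= J0 cards0 /=.
  by case: (par i); case: e {zP}.
by apply: (sigma_deg (z i)); rewrite cards_eq0.
Qed.

Lemma Pi_par : par_map (kpar par) par false (@one_pi R N n).
Proof.
move=> e x xP i iP; rewrite ffunE xP //; move: iP; rewrite /kpar /= cards0 /=.
by case: (par i); case: e {xP}.
Qed.

Lemma dXR_par : par_map par par true (dXR dX).
Proof.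
move=> e z zP i iP; rewrite ffunE big1 // => j _.
case: (eqVneq (par j) (par i)) => pij; first by rewrite dX_odd ?mul0r // pij.
rewrite zP ?mulr0 //; move: pij iP; case: (par i); case: (par j); by case: e {zP}.
Qed.

Lemma Sg_lin (c : S) z (z' : XR R N) : Sg (c *: z + z') = c *: Sg z + Sg z'.
Proof. by apply/ffunP => k; rewrite !ffunE sigma_lin !ffunE. Qed.

Lemma dXR_sq z i : dXR dX (dXR dX z) i = V * z i.
Proof.
rewrite ffunE; under eq_bigr => j _ do rewrite ffunE mulr_sumr.
rewrite exchange_big /=.
have e : forall l, \sum_j dX i j * (dX j l * z l) = (dX *m dX) i l * z l.
  by move=> l; rewrite mxE mulr_suml; apply: eq_bigr => j _; rewrite mulrA.
under eq_bigr => l _ do rewrite e dX_sq mxE.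
rewrite (bigD1 i) //= eqxx mulr1n big1 ?addr0 // => l li.
by rewrite eq_sym (negbTE li) mulr0n mul0r.
Qed.

Lemma Pi_TT y : one_pi (TT y) = one_pi y.
Proof.
rewrite /TT Pi_sum big_ord_recl big1 ?addr0 => [|m _] /=.
  by rewrite expr0 scale1r.
by rewrite Pi_Z -iterS /= Pi_H scaler0.
Qed.

Lemma main_sec :
  let W := \sum_i a i * b i in
  let D := Dtot par dX a b in
  let sinf := sigma_inf par dX a h sigma in
  par_map (kpar par) (kpar par) true D /\
  (forall x : KX R N n, D (D x) = [ffun k => (V + W) * x k]) /\
  par_map par par true (dXR dX) /\
  (forall (z : XR R N) i, in_ideal b (dXR dX (dXR dX z) i - (V + W) * z i)) /\
  linear sinf /\
  (forall z : XR R N, (forall i, in_ideal b (z i)) -> sinf z = 0) /\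
  par_map par (kpar par) false sinf /\
  (forall z : XR R N, D (sinf z) = sinf (dXR dX z)) /\
  par_map (kpar par) par false (@one_pi R N n) /\
  (forall (x : KX R N n) i, in_ideal b (one_pi (D x) i - dXR dX (one_pi x) i)) /\
  (forall (z : XR R N) i, in_ideal b (one_pi (sinf z) i - z i)) /\
  exists hinf : KX R N n -> KX R N n,
    linear hinf /\ par_map (kpar par) (kpar par) true hinf /\
    (forall x : KX R N n, D (hinf x) + hinf (D x) = x - sinf (one_pi x)).
Proof.
move=> W D sinf.
have sinfE : forall z, sinf z = TT (Sg z) by [].
split; first exact: DD_par.
split; first by move=> x; exact: Dsq.
split; first exact: dXR_par.
split.
  move=> z i; rewrite dXR_sq // /W; exists (fun l => - (a l * z i)).
  rewrite mulrDl opprD addrA subrr add0r mulr_suml -sumrN; apply: eq_bigr => l _ /=; ring.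
split.
  move=> c u v; rewrite !sinfE Sg_lin // (TT_slin) //.
split.
  move=> z zI; rewrite sinfE.
  have -> : Sg z = 0 by apply/ffunP => k; rewrite !ffunE sigma_wd ?ffunE //; apply: zI.
  exact: slin_0 TT_slin.
split.
  exact: (par_map_comp Sg_par TT_par).
split; first by move=> z; rewrite !sinfE; exact: D_sinf.
split; first exact: Pi_par.
split.
  move=> x i; rewrite /D.
  have -> : Dtot par dX a b x = dd x + MM x by [].
  rewrite Pi_add ffunE Pi_MM [dXR _ _ _]ffunE.
  have -> : \sum_j dX i j * one_pi x j = \sum_j dX i j * x (j, set0).
    by apply: eq_bigr => j _; rewrite ffunE.
  rewrite addrK; exists (fun l => psign R (par i) * contr l (rowx x i) set0).
  rewrite !ffunE /= mulr_sumr; apply: eq_bigr => l _ /=; ring.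
split.
  move=> z i; rewrite sinfE Pi_TT ffunE ffunE /=; exists (cf (z i)).
  by rewrite sig0.
exists (fun x => TT (Hh x)).
split; first exact: (slin_comp TT_slin Hh_slin).
split; first exact: (par_map_comp Hh_par TT_par).
move=> x; exact: hinf_htpy.
Qed.

End Main.

Unset Implicit Arguments.

Theorem propositionD1 (S : comNzRingType) (R : comAlgType S) (n : nat)
  (a b : 'I_n -> R)
  (Rnoeth : noetherian R) (breg : regular_seq b)
  (sigma : R -> ext R n) (h : ext R n -> ext R n)
  (sigma_lin : linear sigma)
  (sigma_wd : forall x, in_ideal b x -> sigma x = 0)
  (sigma_deg : forall x, hom_deg 0 (sigma x))
  (sigma_chain : forall x, delta_plus b (sigma x) = 0)
  (h_lin : linear h)
  (h_deg : forall (k : nat) (w : ext R n), hom_deg k w -> hom_deg k.+1 (h w))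
  (h_htpy : forall w, delta_plus b (h w) + h (delta_plus b w) = w - sigma (w set0))
  (h_sq : forall w, h (h w) = 0)
  (h_sig : forall x, h (sigma x) = 0)
  (N : nat) (par : 'I_N -> bool) (dX : 'M[R]_N) (V : R)
  (dX_odd : forall i j, par i = par j -> dX i j = 0)
  (dX_sq : dX *m dX = V%:M)
  (VW : exists s : S, V + \sum_i a i * b i = s%:A) :
  let W := \sum_i a i * b i in
  let D := Dtot par dX a b in
  let sinf := sigma_inf par dX a h sigma in
  (* (X (x) /\F, 1 (x) delta_+ + mu) is a linear factorisation of V + W *)
  par_map (kpar par) (kpar par) true D /\
  (forall x : KX R N n, D (D x) = [ffun k => (V + W) * x k]) /\
  (* (X (x) R/(b), d_X (x) 1) is a linear factorisation of V + W *)
  par_map par par true (dXR dX) /\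
  (forall (z : XR R N) i, in_ideal b (dXR dX (dXR dX z) i - (V + W) * z i)) /\
  (* sigma_oo : well-defined S-linear even morphism *)
  linear sinf /\
  (forall z : XR R N, (forall i, in_ideal b (z i)) -> sinf z = 0) /\
  par_map par (kpar par) false sinf /\
  (forall z : XR R N, D (sinf z) = sinf (dXR dX z)) /\
  (* 1 (x) pi : even morphism *)
  par_map (kpar par) par false (@one_pi R N n) /\
  (forall (x : KX R N n) i, in_ideal b (one_pi (D x) i - dXR dX (one_pi x) i)) /\
  (* p iota = 1 on X (x) R/(b) *)
  (forall (z : XR R N) i, in_ideal b (one_pi (sinf z) i - z i)) /\
  (* the homotopy h_oo *)
  exists hinf : KX R N n -> KX R N n,
    linear hinf /\ par_map (kpar par) (kpar par) true hinf /\
    (forall x : KX R N n, D (hinf x) + hinf (D x) = x - sinf (one_pi x)).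
Proof.
case: VW => s Vs.
apply: main_sec.
all: try eassumption.
Qed.
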